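(* Let $p$ be a prime and $r\in\mathbb{Z}$. Let $j\in\{0,1,\dots,p-1\}$ be the residue of $-r$ modulo $p$ and $K=\sum_{k=1}^{j}p^k$. Then for all integers $n\geq K$, \[ B_{n,r}\equiv B_{n-K}\pmod p. \]
   Context: $B_n$ is the $n$-th Bell number. For any integer $s$, the $s$-Bell numbers are defined by $\sum_{n\geq0}B_{n,s}\frac{t^n}{n!}=e^{e^t-1+st}$. *)

(* Defs.v *)
From HB Require Import structures.
From mathcomp Require Import all_boot all_order all_algebra.
Set Implicit Arguments. Unset Strict Implicit. Unset Printing Implicit Defensive.
Import Order.TTheory GRing.Theory Num.Theory.

Fixpoint stirling2 (n k : nat) : nat :=
  match n, k with
  | 0, 0 => 1
  | 0, _.+1 => 0
  | _.+1, 0 => 0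
  | n'.+1, k'.+1 => k'.+1 * stirling2 n' k'.+1 + stirling2 n' k'
  end.

Definition bell (n : nat) : nat := \sum_(0 <= k < n.+1) stirling2 n k.

(* The s-Bell numbers, s : int, defined by
     sum_n B_{n,s} t^n/n! = e^{e^t - 1 + s t} = e^{e^t-1} * e^{s t};
   extracting the coefficient of t^n/n! of this product of exponential
   generating functions gives  B_{n,s} = sum_i C(n,i) s^(n-i) B_i. *)
Definition sbell (n : nat) (s : int) : int :=
  (\sum_(0 <= i < n.+1) ('C(n, i))%:Z * s ^+ (n - i) * (bell i)%:Z)%R.

(* Main.v *)
Require Import Defs.
From mathcomp Require Import all_boot all_order all_algebra.
From mathcomp Require Import all_field.
From mathcomp Require Import zify ring.
Import Order.TTheory GRing.Theory Num.Theory.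

Lemma stirling_gt n k : n < k -> stirling2 n k = 0.
Proof.
elim: n k => [|n IH] [|k] //= h.
rewrite !IH //; lia.
Qed.

Lemma stirling_n1 n : stirling2 n.+1 1 = 1.
Proof. elim: n => [|n IH] //. change (1 * stirling2 n.+1 1 + stirling2 n.+1 0 = 1). by rewrite IH. Qed.

Lemma stirlingS n k : stirling2 n.+1 k.+1 = k.+1 * stirling2 n k.+1 + stirling2 n k.
Proof. by []. Qed.

Arguments stirling2 : simpl never.

Lemma stirling_rec n k :
  stirling2 n.+1 k.+1 = \sum_(i < n.+1) 'C(n, i) * stirling2 i k.
Proof.
elim: n k => [|n IH] k.
  rewrite big_ord_recl big_ord0 /= addn0; case: k => [|k] //; by rewrite stirlingS muln0.
case: k => [|k].
  rewrite stirling_n1 big_ord_recl big1 ?addn0 // => i _; by rewrite lift0 (_ : stirling2 i.+1 0 = 0) // muln0.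
rewrite stirlingS !IH.
rewrite [RHS]big_ord_recl bin0 mul1n (_ : stirling2 0 k.+1 = 0) // add0n.
under [RHS]eq_bigr => i _ do rewrite lift0 binS mulnDl.
set A := \sum_(i < n.+1) 'C(n, i) * stirling2 i k.+1.
set B := \sum_(i < n.+1) 'C(n, i) * stirling2 i k.
have E1 : \sum_(i < n.+1) 'C(n, i) * stirling2 i.+1 k.+1 = k.+1 * A + B.
  rewrite /A /B big_distrr -big_split; apply: eq_bigr => i _.
  by rewrite stirlingS mulnDr mulnA [_ * k.+1]mulnC -mulnA.
have E2 : \sum_(i < n.+1) 'C(n, i.+1) * stirling2 i.+1 k.+1 = A.
  rewrite big_ord_recr /= bin_small // mul0n addn0 /A big_ord_recl (_ : stirling2 0 k.+1 = 0) // muln0 add0n.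
  by apply: eq_bigr => i _; rewrite lift0.
rewrite big_split E1 E2.
rewrite /=; lia.
Qed.

Lemma bellE i m : i <= m -> bell i = \sum_(k < m.+1) stirling2 i k.
Proof.
move=> h; rewrite /bell -(big_mkord xpredT (stirling2 i)).
rewrite [RHS](big_cat_nat _ (n := i.+1)) //=.
rewrite [X in _ = _ + X]big1_seq ?addn0 // => k /andP[_]; rewrite mem_index_iota.
by move=> /andP[hk _]; rewrite stirling_gt.
Qed.

Lemma bell_rec n : bell n.+1 = \sum_(i < n.+1) 'C(n, i) * bell i.
Proof.
rewrite (@bellE n.+1 n.+1 (leqnn _)) big_ord_recl /= add0n.
under eq_bigr => k _ do rewrite stirling_rec.
rewrite exchange_big /=; apply: eq_bigr => i _.
rewrite -big_distrr /= (@bellE i n) //; exact: ltnSE (ltn_ord i).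
Qed.

Local Open Scope ring_scope.

Definition L (p : nat) (q : {poly 'F_p}) : 'F_p :=
  \sum_(i < size q) q`_i * (bell i)%:R.
Arguments L {p}.

Lemma LE (p : nat) (q : {poly 'F_p}) n : (size q <= n)%N -> L q = \sum_(i < n) q`_i * (bell i)%:R.
Proof.
move=> h; rewrite /L (big_ord_widen _ (fun i => q`_i * (bell i)%:R) h) big_mkcond.
apply: eq_bigr => i _; case: ifP => // /negbT; rewrite -leqNgt => hi.
by rewrite nth_default // mul0r.
Qed.

Lemma LD (p : nat) (a b : {poly 'F_p}) : L (a + b) = L a + L b.
Proof.
set n := maxn (size a) (size b).
rewrite !(@LE _ _ n) ?leq_maxl ?leq_maxr ?size_polyD // -big_split.
by apply: eq_bigr => i _; rewrite coefD mulrDl.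
Qed.

Lemma LZ (p : nat) c (a : {poly 'F_p}) : L (c *: a) = c * L a.
Proof.
rewrite !(@LE _ _ (size a)) ?size_scale_leq // big_distrr.
by apply: eq_bigr => i _; rewrite coefZ -mulrA.
Qed.

Lemma L0 (p : nat) : L (0 : {poly 'F_p}) = 0.
Proof. by rewrite /L size_poly0 big_ord0. Qed.

Lemma LN (p : nat) (a : {poly 'F_p}) : L (- a) = - L a.
Proof. by rewrite -scaleN1r LZ mulN1r. Qed.

Lemma LB (p : nat) (a b : {poly 'F_p}) : L (a - b) = L a - L b.
Proof. by rewrite LD LN. Qed.

Lemma Lsum (p : nat) I (r : seq I) (P : pred I) (G : I -> {poly 'F_p}) :
  L (\sum_(i <- r | P i) G i) = \sum_(i <- r | P i) L (G i).
Proof. exact: (big_morph _ (@LD p) (@L0 p)). Qed.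

Lemma LMn (p : nat) (a : {poly 'F_p}) m : L (a *+ m) = L a *+ m.
Proof. by rewrite -scaler_nat LZ mulr_natl. Qed.

Lemma LXn (p : nat) n : L ('X^n : {poly 'F_p}) = (bell n)%:R.
Proof.
rewrite /L size_polyXn big_ord_recr /= coefXn eqxx mul1r big1 ?add0r // => i _.
by rewrite coefXn (ltn_eqF (ltn_ord i)) mul0r.
Qed.

Lemma LX1 (p : nat) n : L (('X + 1) ^+ n : {poly 'F_p}) = (bell n.+1)%:R.
Proof.
rewrite addrC exprDn Lsum bell_rec natr_sum; apply: eq_bigr => i _.
by rewrite expr1n mul1r LMn LXn natrM mulr_natl.
Qed.

Lemma LXM (p : nat) (f : {poly 'F_p}) : L ('X * f) = L (f \Po ('X + 1)).
Proof.
rewrite -[f in 'X * f]coefK poly_def comp_polyE mulr_sumr !Lsum.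
apply: eq_bigr => i _.
by rewrite -scalerAr -exprS !LZ LXn LX1.
Qed.

Lemma LshiftK (p : nat) k (h : {poly 'F_p}) :
  L (\prod_(i < k) ('X - i%:R%:P) * h) = L (h \Po ('X + k%:R%:P)).
Proof.
elim: k h => [|k IH] h.
  by rewrite big_ord0 mul1r polyC0 addr0 comp_polyXr.
rewrite big_ord_recl /= polyC0 subr0 -mulrA LXM rmorphM /= rmorph_prod /=.
under eq_bigr => i _ do rewrite rmorphB /= comp_polyX comp_polyC.
have -> : \prod_(i < k) ('X + 1 - (bump 0 i)%:R%:P) = \prod_(i < k) ('X - i%:R%:P) :> {poly 'F_p}.
  apply: eq_bigr => i _; rewrite (_ : bump 0 i = i.+1) // -natr1 polyCD polyC1; ring.
rewrite IH -comp_polyA rmorphD /= comp_polyX comp_polyC -natr1 polyCD polyC1.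
congr (L (h \Po _)); ring.
Qed.

Lemma prodFp {p : nat} (hp : prime p) :
  \prod_(i < p) ('X - i%:R%:P) = 'X^p - 'X :> {poly 'F_p}.
Proof.
rewrite -[X in 'X^X - _](card_Fp hp) finField_genPoly.
have ltx : forall x : 'F_p, (val x < p)%N.
  by move=> x; rewrite -[p in (_ < p)%N](Fp_cast hp); exact: ltn_ord.
rewrite (reindex (fun i : 'I_p => (i%:R : 'F_p))) /=; first by [].
exists (fun x : 'F_p => Ordinal (ltx x)) => [i _ | x _]; apply: val_inj => /=.
  by rewrite val_Fp_nat // modn_small.
by rewrite val_Fp_nat // modn_small ?ltx.
Qed.

Lemma chP {p : nat} (hp : prime p) : p \in [pchar {poly 'F_p}].
Proof. by rewrite pchar_poly; exact: pchar_Fp. Qed.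

Lemma frobB {p : nat} (hp : prime p) e (a b : {poly 'F_p}) :
  (a - b) ^+ (p ^ e) = a ^+ (p ^ e) - b ^+ (p ^ e).
Proof.
elim: e => [|e IH]; first by rewrite expn0 !expr1.
by rewrite expnSr !exprM IH -!(pFrobenius_autE (@chP _ hp)) rmorphB.
Qed.

Lemma fermat {p : nat} (hp : prime p) e (c : 'F_p) : c ^+ (p ^ e) = c.
Proof.
elim: e => [|e IH]; first by rewrite expn0 expr1.
have := expf_card c; rewrite card_Fp // => Ec.
by rewrite expnSr exprM IH Ec.
Qed.

Lemma frobB1 {p : nat} (hp : prime p) (a b : {poly 'F_p}) :
  (a - b) ^+ p = a ^+ p - b ^+ p.
Proof. by have := frobB hp 1 a b; rewrite expn1. Qed.

Lemma fermat1 {p : nat} (hp : prime p) (c : 'F_p) : c ^+ p = c.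
Proof. by have := fermat hp 1 c; rewrite expn1. Qed.

Lemma Tdiv {p : nat} (hp : prime p) e : exists q : {poly 'F_p},
  'X^(p ^ e) - 'X - e%:R%:P = q * ('X^p - 'X - 1).
Proof.
elim: e => [|e [q Hq]].
  by exists 0; rewrite expn0 expr1 polyC0 !subrr mul0r.
have F1 : ('X^(p ^ e) - 'X - e%:R%:P) ^+ p = 'X^(p ^ e.+1) - 'X^p - e%:R%:P :> {poly 'F_p}.
  by rewrite !frobB1 // -rmorphXn fermat1 // -exprM -expnSr.
have ET : ('X^p - 'X - 1 : {poly 'F_p}) ^+ p = ('X^p - 'X - 1) ^+ p.-1 * ('X^p - 'X - 1).
  by rewrite -exprSr prednK // prime_gt0.
rewrite Hq exprMn ET in F1.
exists (q ^+ p * ('X^p - 'X - 1) ^+ p.-1 + 1).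
move: F1; rewrite -natr1 polyCD polyC1.
set Y := 'X^(p ^ e.+1); set Xp := 'X^p; set Q := q ^+ p; set R := _ ^+ p.-1.
move=> HA; have -> : Y = Q * (R * (Xp - 'X - 1)) + Xp + (e%:R)%:P.
  by rewrite HA; ring.
ring.
Qed.


Lemma LT {p : nat} (hp : prime p) (h : {poly 'F_p}) : L (h * ('X^p - 'X - 1)) = 0.
Proof.
rewrite -prodFp // mulrBr mulr1 mulrC LB LshiftK pchar_Fp_0 // polyC0 addr0.
by rewrite comp_polyXr subrr.
Qed.

Lemma LTe {p : nat} (hp : prime p) e (h : {poly 'F_p}) :
  L (h * ('X^(p ^ e) - 'X - e%:R%:P)) = 0.
Proof. by have [q ->] := Tdiv hp e; rewrite mulrA LT. Qed.

Lemma chain {p : nat} (hp : prime p) i m :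
  L (('X - (i.+1)%:R%:P) ^+ (m + p ^ i.+1) : {poly 'F_p}) = L (('X - i%:R%:P) ^+ m).
Proof.
rewrite exprD frobB // -rmorphXn fermat //.
have -> : 'X^(p ^ i.+1) - (i.+1)%:R%:P =
    ('X^(p ^ i.+1) - 'X - (i.+1)%:R%:P) + 'X :> {poly 'F_p} by ring.
rewrite mulrDr LD (LTe hp) add0r mulrC LXM rmorphXn rmorphB /= comp_polyX comp_polyC.
by rewrite -natr1 polyCD polyC1; congr (L (_ ^+ _)); ring.
Qed.

Lemma main_j {p : nat} (hp : prime p) j n :
  (\sum_(1 <= k < j.+1) p ^ k <= n)%N ->
  L (('X - j%:R%:P) ^+ n : {poly 'F_p}) = (bell (n - \sum_(1 <= k < j.+1) p ^ k))%:R.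
Proof.
elim: j n => [|j IH] n.
  by rewrite big_geq // subn0 polyC0 subr0 LXn.
rewrite big_nat_recr //= => hn.
have -> : n = (n - p ^ j.+1 + p ^ j.+1)%N by rewrite subnK //; lia.
rewrite chain // IH; last by lia.
congr ((bell _)%:R); lia.
Qed.

Local Open Scope ring_scope.

Lemma intr_natE (R : pzRingType) (n : nat) : ((n%:Z)%:~R : R) = n%:R.
Proof. by []. Qed.

Lemma L_binom {p : nat} (c : 'F_p) n :
  L (('X - c%:P) ^+ n) = (\sum_(i < n.+1) ((- c) ^+ (n - i) * (bell i)%:R) *+ 'C(n, i))%R.
Proof.
rewrite -polyCN addrC exprDn Lsum; apply: eq_bigr => i _.
by rewrite LMn -rmorphXn mul_polyC LZ LXn.
Qed.

Lemma phi_r {p : nat} (hp : prime p) (r : int) :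
  ((`|((- r) %% (p%:Z))%Z|%N)%:R : 'F_p) = (- (r%:~R))%R.
Proof.
have p0 : (p%:Z != 0) by rewrite eqz_nat -lt0n prime_gt0.
rewrite -intr_natE gez0_abs ?modz_ge0 //.
have E := divz_eq (- r) p.
set q := ((- r) %/ p)%Z in E *; set m := ((- r) %% p)%Z in E *.
have -> : m = - r - q * p by rewrite E; ring.
by rewrite rmorphB rmorphN rmorphM /= intr_natE pchar_Fp_0 // mulr0 subr0.
Qed.

Local Close Scope ring_scope.
Theorem corollary5 (p : nat) (r : int) (hp : prime p) :
  let j : nat := `|((- r) %% (p%:Z))%Z|%N in
  let K : nat := (\sum_(1 <= k < j.+1) p ^ k)%N in
  forall n : nat, (K <= n)%N ->
    (sbell n r = (bell (n - K))%:Z %[mod (p%:Z)])%Z.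
Proof.
move=> j K n hn.
apply/eqP; rewrite eqz_mod_dvd (dvdz_pcharf (pchar_Fp hp)) rmorphB /= subr_eq0; apply/eqP.
rewrite intr_natE -(@main_j _ hp j n hn) L_binom /sbell rmorph_sum big_mkord /=.
apply: eq_bigr => i _.
rewrite !rmorphM /= !intr_natE rmorphXn /= /j (phi_r hp r) opprK.
by rewrite -mulrA mulr_natl.
Qed.
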